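(* Let $\mathcal C$ be a category, $n\ge1$, and let $f:A\to B$ be a degeneracy map in $Z^n(\mathcal C)$. Then $f$ factors, uniquely up to isomorphism, as a simple degeneracy map followed by a parallel degeneracy map.
   Context: Notation: for $n\ge 0$, $[n]$ denotes $\{0,\dots,n-1\}$; $\Delta_+$ is the category of these finite total orders and order-preserving maps. For monotone $\varphi:[n]\to[m]$ define $\hat\varphi:[m+1]\to[n+1]$ by $\hat\varphi(i)=\min(\{j\in[n]:\varphi(j)\ge i\}\cup\{n\})$. Zigzags: in a category $\mathcal C$, a zigzag $X$ of length $n$ is a diagram $X(r_0)\xrightarrow{x_0} X(s_0)\xleftarrow{x'_0} X(r_1)\to\cdots\xrightarrow{x_{n-1}} X(s_{n-1})\xleftarrow{x'_{n-1}} X(r_n)$. A zigzag map $f:X\to Y$ (lengths $n$, $m$) consists of a monotone $f_s:[n]\to[m]$, regular slices $f(r_i):X(r_{\hat{f_s}(i)})\to Y(r_i)$ for $0\le i\le m$ and singular slices $f(s_j):X(s_j)\to Y(s_{f_s(j)})$ for $0\le j<n$, such that for each $0\le i<m$: if $f_s^{-1}(i)\neq\emptyset$ with least element $p$, greatest $q$, then $f(s_p)\circ x_p=y_i\circ f(r_i)$, $f(s_q)\circ x'_q=y'_i\circ f(r_{i+1})$, $f(s_j)\circ x'_j=f(s_{j+1})\circ x_{j+1}$ for $p\le j<q$; if $f_s^{-1}(i)=\emptyset$ then $y_i\circ f(r_i)=y'_i\circ f(r_{i+1})$. Composition: $(g\circ f)_s=g_s\circ f_s$, $(g\circ f)(s_j)=g(s_{f_s(j)})\circ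 f(s_j)$, $(g\circ f)(r_i)=g(r_i)\circ f(r_{\hat{g_s}(i)})$. This gives a category $Z(\mathcal C)$; $Z^0(\mathcal C)=\mathcal C$, $Z^n(\mathcal C)=Z(Z^{n-1}(\mathcal C))$. $\pi:Z(\mathcal C)\to\Delta_+$ sends a zigzag of length $n$ to $[n]$ and $f$ to $f_s$; $f$ is $\pi$-vertical if $\pi(f)$ is an identity; $f:x\to y$ is $\pi$-cocartesian if for every $h:x\to y'$ and $u:\pi(y)\to\pi(y')$ with $u\circ\pi(f)=\pi(h)$ there is a unique $v:y\to y'$ with $v\circ f=h$, $\pi(v)=u$. Degeneracy maps in $Z^n(\mathcal C)$ (by induction on $n$): in $Z^0(\mathcal C)$ the isomorphisms; for $n\ge1$ the maps generated under composition by simple degeneracy maps (the $\pi$-cocartesian maps $f$ with $\pi(f)$ a monomorphism of $\Delta_+$) and parallel degeneracy maps (the $\pi$-vertical maps whose regular and singular slices are all degeneracy maps in $Z^{n-1}(\mathcal C)$). *)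

(* Defs.v *)
From mathcomp Require Import all_boot.
Set Implicit Arguments.
Unset Strict Implicit.
Unset Printing Implicit Defensive.

Record Category := {
  cOb : Type;
  cHom : cOb -> cOb -> Type;
  cid : forall a, cHom a a;
  ccomp : forall a b c, cHom b c -> cHom a b -> cHom a c;
  ccompA : forall a b c d (h : cHom c d) (g : cHom b c) (f : cHom a b),
      ccomp h (ccomp g f) = ccomp (ccomp h g) f;
  ccomp1l : forall a b (f : cHom a b), ccomp (cid b) f = f;
  ccomp1r : forall a b (f : cHom a b), ccomp f (cid a) = f }.
Arguments ccomp {_ _ _ _} _ _.

(* "Category data with distinguished (valid) objects and morphisms".
   Z^n(C) is presented as such a structure: its genuine objects/morphisms
   are exactly those satisfying okOb/okHom. *)
Record CatD := {
  Ob : Type;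
  Hom : Ob -> Ob -> Type;
  idm : forall a, Hom a a;
  comp : forall a b c, Hom b c -> Hom a b -> Hom a c;
  okOb : Ob -> Prop;
  okHom : forall a b, Hom a b -> Prop }.
Arguments Hom : clear implicits.
Arguments idm {_} _.
Arguments comp {_ _ _ _} _ _.
Arguments okOb {_} _.
Arguments okHom {_ _ _} _.

Definition catD (C : Category) : CatD :=
  {| Ob := cOb C; Hom := @cHom C; idm := @cid C; comp := @ccomp C;
     okOb := fun _ => True; okHom := fun _ _ _ => True |}.

(* packed arrows, used to compare morphisms whose (propositionally equal)
   endpoints are given by different index expressions *)
Definition pk (D : CatD) (a b : Ob D) (h : Hom D a b)
  : {ab : Ob D * Ob D & Hom D ab.1 ab.2} := existT _ (a, b) h.
Arguments pk {_ _ _} _.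

Definition isIso (D : CatD) (a b : Ob D) (f : Hom D a b) : Prop :=
  okHom f /\ exists g : Hom D b a, okHom g /\ comp g f = idm a /\ comp f g = idm b.

(* Delta_+ : maps 'I_n -> 'I_m                                          *)
Definition monotone (n m : nat) (f : 'I_n -> 'I_m) : Prop :=
  forall a b : 'I_n, a <= b -> f a <= f b.

Definition hat (n m : nat) (f : 'I_n -> 'I_m) (i : 'I_m.+1) : 'I_n.+1 :=
  inord (\big[minn/n]_(j < n | i <= f j) (j : nat)).

Definition monoD (n m : nat) (f : 'I_n -> 'I_m) : Prop :=
  monotone f /\
  forall k (a b : 'I_k -> 'I_n), monotone a -> monotone b ->
    (forall t, f (a t) = f (b t)) -> forall t, a t = b t.

Definition rI (n : nat) (j : 'I_n) : 'I_n.+1 := widen_ord (leqnSn n) j.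
Definition rS (n : nat) (j : 'I_n) : 'I_n.+1 := lift ord0 j.

(* Zigzags: X(r_0) -x_0-> X(s_0) <-x'_0- X(r_1) -> ... <- X(r_n)        *)
Record zz (D : CatD) := Zz {
  zlen : nat;
  zreg : 'I_zlen.+1 -> Ob D;
  zsing : 'I_zlen -> Ob D;
  zfwd : forall j : 'I_zlen, Hom D (zreg (rI j)) (zsing j);
  zbwd : forall j : 'I_zlen, Hom D (zreg (rS j)) (zsing j) }.
Arguments zlen {D} X : rename.
Arguments zreg {D} X i : rename.
Arguments zsing {D} X j : rename.
Arguments zfwd {D} X j : rename.
Arguments zbwd {D} X j : rename.

(* Zigzag (pre)maps.  zr is the index map of the regular slices, required
   by okZm to be hat zs. *)
Record zmap (D : CatD) (X Y : zz D) := Zm {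
  zs : 'I_(zlen X) -> 'I_(zlen Y);
  zr : 'I_(zlen Y).+1 -> 'I_(zlen X).+1;
  zrs : forall i : 'I_(zlen Y).+1, Hom D (zreg X (zr i)) (zreg Y i);
  zss : forall j : 'I_(zlen X), Hom D (zsing X j) (zsing Y (zs j)) }.
Arguments zs {D X Y} f j : rename.
Arguments zr {D X Y} f i : rename.
Arguments zrs {D X Y} f i : rename.
Arguments zss {D X Y} f j : rename.

Definition okZz (D : CatD) (X : zz D) : Prop :=
  (forall i, okOb (zreg X i)) /\ (forall j, okOb (zsing X j)) /\
  (forall j, okHom (zfwd X j)) /\ (forall j, okHom (zbwd X j)).

Definition okZm (D : CatD) (X Y : zz D) (f : zmap X Y) : Prop :=
  monotone (zs f) /\
  (forall i, zr f i = hat (zs f) i) /\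
  (forall i, okHom (zrs f i)) /\ (forall j, okHom (zss f j)) /\
  (forall i : 'I_(zlen Y),
     (forall p q : 'I_(zlen X), zs f p = i -> zs f q = i ->
        (forall j, zs f j = i -> p <= j <= q) ->
        pk (comp (zss f p) (zfwd X p)) = pk (comp (zfwd Y i) (zrs f (rI i))) /\
        pk (comp (zss f q) (zbwd X q)) = pk (comp (zbwd Y i) (zrs f (rS i))) /\
        (forall j j' : 'I_(zlen X), p <= j -> j < q -> (j' : nat) = j.+1 ->
           pk (comp (zss f j) (zbwd X j)) = pk (comp (zss f j') (zfwd X j')))) /\
     ((forall j, zs f j <> i) ->
        pk (comp (zfwd Y i) (zrs f (rI i))) = pk (comp (zbwd Y i) (zrs f (rS i))))).

Definition zid (D : CatD) (X : zz D) : zmap X X :=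
  @Zm D X X (fun j => j) (fun i => i) (fun i => idm _) (fun j => idm _).

Definition zcomp (D : CatD) (X Y W : zz D) (g : zmap Y W) (f : zmap X Y) : zmap X W :=
  @Zm D X W (fun j => zs g (zs f j)) (fun i => zr f (zr g i))
     (fun i => comp (zrs g i) (zrs f (zr g i)))
     (fun j => comp (zss g (zs f j)) (zss f j)).

Definition Z (D : CatD) : CatD :=
  {| Ob := zz D; Hom := @zmap D; idm := @zid D; comp := @zcomp D;
     okOb := @okZz D; okHom := @okZm D |}.

Fixpoint iterZ (n : nat) (D : CatD) : CatD :=
  match n with 0 => D | k.+1 => Z (iterZ k D) end.

Definition vertical (D : CatD) (X Y : zz D) (f : zmap X Y) : Prop :=
  zlen X = zlen Y /\ forall j, (zs f j : nat) = j.

Definition cocartesian (D : CatD) (X Y : zz D) (f : zmap X Y) : Prop :=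
  forall (Y' : zz D) (h : zmap X Y'), okZz Y' -> okZm h ->
  forall u : 'I_(zlen Y) -> 'I_(zlen Y'), monotone u ->
    (forall j, u (zs f j) = zs h j) ->
    (exists v : zmap Y Y', okZm v /\ zcomp v f = h /\ forall j, zs v j = u j) /\
    (forall v v' : zmap Y Y', okZm v -> okZm v' ->
       zcomp v f = h -> zcomp v' f = h ->
       (forall j, zs v j = u j) -> (forall j, zs v' j = u j) -> v = v').

Definition simpleDeg (D : CatD) (X Y : zz D) (f : zmap X Y) : Prop :=
  okZm f /\ cocartesian f /\ monoD (zs f).

Definition parallelDeg (D : CatD) (P : forall a b : Ob D, Hom D a b -> Prop)
    (X Y : zz D) (f : zmap X Y) : Prop :=
  okZm f /\ vertical f /\ (forall i, P _ _ (zrs f i)) /\ (forall j, P _ _ (zss f j)).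

Inductive genComp (D : CatD) (P : forall a b : Ob D, Hom D a b -> Prop)
  : forall a b : Ob D, Hom D a b -> Prop :=
| gc_base a b (f : Hom D a b) : P a b f -> genComp P f
| gc_comp a b c (f : Hom D a b) (g : Hom D b c) :
    okOb b -> genComp P f -> genComp P g -> genComp P (comp g f).

Fixpoint degen (D : CatD) (n : nat)
  : forall a b : Ob (iterZ n D), Hom (iterZ n D) a b -> Prop :=
  match n as n0 return forall a b : Ob (iterZ n0 D), Hom (iterZ n0 D) a b -> Prop with
  | 0 => @isIso D
  | k.+1 => @genComp (Z (iterZ k D))
              (fun a b f => simpleDeg f \/ parallelDeg (@degen D k) f)
  end.

(* Main.v *)
Require Import Defs.
From mathcomp Require Import all_boot.
From mathcomp Require Import zify.
From Stdlib Require Import FunctionalExtensionality Eqdep IndefiniteDescription.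
Require Import Defs.
Set Implicit Arguments.
Unset Strict Implicit.
Unset Printing Implicit Defensive.

Definition packed (D : CatD) := {ab : Ob D * Ob D & Hom D ab.1 ab.2}.

Section Pk.
Variable D : CatD.

Lemma pk_inj (a b : Ob D) (f g : Hom D a b) : pk f = pk g -> f = g.
Proof. move=> e; exact: (inj_pair2 (Ob D * Ob D) (fun ab : Ob D * Ob D => Hom D ab.1 ab.2) (a, b) f g e). Qed.

Lemma pk_ends (a b a' b' : Ob D) (f : Hom D a b) (g : Hom D a' b') :
  pk f = pk g -> a = a' /\ b = b'.
Proof. by move=> /(f_equal (@projT1 _ _)) [-> ->]. Qed.

Lemma pk_tr (Q : forall a b : Ob D, Hom D a b -> Prop) (a b a' b' : Ob D)
  (f : Hom D a b) (g : Hom D a' b') : pk f = pk g -> Q a b f -> Q a' b' g.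
Proof.
move=> e; case: (pk_ends e) => ea eb; subst a' b'.
by rewrite (pk_inj e).
Qed.

Lemma pk_comp (a b c a' b' c' : Ob D) (g : Hom D b c) (f : Hom D a b)
  (g' : Hom D b' c') (f' : Hom D a' b') :
  pk g = pk g' -> pk f = pk f' -> pk (comp g f) = pk (comp g' f').
Proof.
move=> e1 e2; case: (pk_ends e1) => eb ec; case: (pk_ends e2) => ea _.
subst b' c' a'. by rewrite (pk_inj e1) (pk_inj e2).
Qed.

Definition castH (a b a' b' : Ob D) (ea : a = a') (eb : b = b') (f : Hom D a b)
  : Hom D a' b' :=
  match ea in _ = x return Hom D x b' with
  | erefl => match eb in _ = y return Hom D a y with erefl => f end end.

Lemma pk_castH (a b a' b' : Ob D) (ea : a = a') (eb : b = b') (f : Hom D a b) :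
  pk (castH ea eb f) = pk f.
Proof. by case: a' / ea; case: b' / eb. Qed.

Lemma pk_idm (a a' : Ob D) : a = a' -> pk (idm a) = pk (idm a').
Proof. by move->. Qed.

Lemma pk_ex (a b : Ob D) (c : packed D) : projT1 c = (a, b) ->
  exists h : Hom D a b, pk h = c.
Proof.
case: c => [[x y] h] /= [ea eb]; subst x y. by exists h.
Qed.

End Pk.

Record laws (D : CatD) : Prop := Laws {
  lassoc : forall (a b c d : Ob D) (h : Hom D c d) (g : Hom D b c) (f : Hom D a b),
      comp h (comp g f) = comp (comp h g) f;
  lidl : forall (a b : Ob D) (f : Hom D a b), comp (idm b) f = f;
  lidr : forall (a b : Ob D) (f : Hom D a b), comp f (idm a) = f;
  lokc : forall (a b c : Ob D) (f : Hom D a b) (g : Hom D b c),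
      okHom f -> okHom g -> okHom (comp g f);
  lokid : forall a : Ob D, okHom (idm a) }.

Section PkLaws.
Variables (D : CatD) (L : laws D).

Lemma pk_assoc (a b c d : Ob D) (h : Hom D c d) (g : Hom D b c) (f : Hom D a b) :
  pk (comp h (comp g f)) = pk (comp (comp h g) f).
Proof. by rewrite (lassoc L). Qed.

Lemma pk_compidr (a b b' c : Ob D) (g : Hom D b c) (f : Hom D a b) :
  pk f = pk (idm b') -> pk (comp g f) = pk g.
Proof.
move=> e; case: (pk_ends e) => ea eb; subst a b'.
by rewrite (pk_inj e) (lidr L).
Qed.

Lemma pk_compidl (a b b' c : Ob D) (g : Hom D b c) (f : Hom D a b) :
  pk g = pk (idm b') -> pk (comp g f) = pk f.
Proof.
move=> e; case: (pk_ends e) => ea eb; subst c b'.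
by rewrite (pk_inj e) (lidl L).
Qed.

Lemma okc_pk (a b c : Ob D) (f : Hom D a b) (g : Hom D b c) :
  okHom f -> okHom g -> okHom (comp g f).
Proof. exact: lokc. Qed.

End PkLaws.

Section Hat.

Lemma bigmin_le (n : nat) (P : pred 'I_n) (r : seq 'I_n) (j : 'I_n) :
  j \in r -> P j -> \big[minn/n]_(k <- r | P k) (k : nat) <= j.
Proof.
elim: r => // x r IH; rewrite inE big_cons => /orP [/eqP <-|jr] Pj.
  by rewrite Pj geq_minl.
case: (P x); last exact: IH.
by rewrite geq_min IH ?orbT.
Qed.

Lemma bigmin_att (n : nat) (P : pred 'I_n) (r : seq 'I_n) :
  let b := \big[minn/n]_(k <- r | P k) (k : nat) in
  b = n \/ exists k, P k /\ b = k.
Proof.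
elim: r => [|x r IH] /=; first by rewrite big_nil; left.
rewrite big_cons; case Px: (P x) => //.
rewrite /minn; case: ifP => _; first by right; exists x.
exact: IH.
Qed.

Lemma bigmin_len (n : nat) (P : pred 'I_n) (r : seq 'I_n) :
  \big[minn/n]_(k <- r | P k) (k : nat) <= n.
Proof.
case: (bigmin_att P r) => [->//|[k [_ ->]]]. exact: ltnW.
Qed.

Variables (n m : nat) (f : 'I_n -> 'I_m).

Lemma hat_val (i : 'I_m.+1) :
  (hat f i : nat) = \big[minn/n]_(j < n | i <= f j) (j : nat).
Proof. by rewrite /hat inordK // ltnS bigmin_len. Qed.

Lemma hat_len (i : 'I_m.+1) : hat f i <= n.
Proof. by rewrite -ltnS ltn_ord. Qed.

Hypothesis mf : monotone f.

Lemma hat_le (i : 'I_m.+1) (j : 'I_n) : (hat f i <= j) = (i <= f j).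
Proof.
rewrite hat_val; apply/idP/idP; last first.
  by move=> h; apply: bigmin_le => //; rewrite mem_index_enum.
case: (bigmin_att (fun j : 'I_n => i <= f j) (index_enum 'I_n)) => [->|[k [Pk ->]]].
  by move=> h; move: (ltn_ord j); rewrite ltnNge h.
by move=> kj; apply: leq_trans Pk (mf kj).
Qed.

End Hat.

Lemma le_ext (n a b : nat) : a <= n -> b <= n ->
  (forall j, j < n -> (a <= j) = (b <= j)) -> a = b.
Proof.
move=> an bn H; case: (ltngtP a b) => // ab.
  by have := H a (leq_trans ab bn); rewrite leqnn leqNgt ab.
by have := H b (leq_trans ab an); rewrite leqnn leqNgt ab.
Qed.

Lemma hat_comp (n m p : nat) (f : 'I_n -> 'I_m) (g : 'I_m -> 'I_p) :
  monotone f -> monotone g -> forall i,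
  hat (fun j => g (f j)) i = hat f (hat g i).
Proof.
move=> mf mg i; have mgf : monotone (fun j => g (f j)) by move=> a b ab; apply/mg/mf.
apply: val_inj => /=; apply: (@le_ext n); rewrite ?hat_len //.
move=> j jn; have := hat_le mgf i (Ordinal jn); have := hat_le mf (hat g i) (Ordinal jn).
by rewrite (hat_le mg) /= => -> ->.
Qed.

Lemma hat_mono (n m : nat) (f : 'I_n -> 'I_m) : monotone f ->
  forall i i' : 'I_m.+1, i <= i' -> hat f i <= hat f i'.
Proof.
move=> mf i i' ii'; case: (ltnP (hat f i') n) => [h|h].
  have e1 := hat_le mf i' (Ordinal h); rewrite /= leqnn in e1.
  have e2 := hat_le mf i (Ordinal h); rewrite /= in e2.
  by rewrite e2 (leq_trans ii') // -e1.
exact: leq_trans (hat_len f i) h.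
Qed.

Lemma hat_id (n : nat) (i : 'I_n.+1) : hat (fun j : 'I_n => j) i = i.
Proof.
apply: val_inj => /=; apply: (@le_ext n).
- exact: hat_len.
- by rewrite -ltnS ltn_ord.
by move=> j jn; rewrite (hat_le (f := fun j : 'I_n => j) _ i (Ordinal jn)).
Qed.

Lemma val_rI n (j : 'I_n) : (rI j : nat) = j. Proof. by []. Qed.
Lemma val_rS n (j : 'I_n) : (rS j : nat) = j.+1. Proof. by []. Qed.

Lemma zmap_eq (D : CatD) (X Y : zz D) (f g : zmap X Y) :
  (forall j, zs f j = zs g j) -> (forall i, zr f i = zr g i) ->
  (forall i, pk (zrs f i) = pk (zrs g i)) -> (forall j, pk (zss f j) = pk (zss g j)) ->
  f = g.
Proof.
case: f => s1 r1 rs1 ss1; case: g => s2 r2 rs2 ss2 /= e1 e2 e3 e4.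
have E1 : s1 = s2 by apply: functional_extensionality.
have E2 : r1 = r2 by apply: functional_extensionality.
subst s2 r2; f_equal; apply: functional_extensionality_dep => x; exact: pk_inj.
Qed.

Section ZLaws0.
Variables (D : CatD) (L : laws D).

Lemma zassoc (X Y W V : zz D) (h : zmap W V) (g : zmap Y W) (f : zmap X Y) :
  zcomp h (zcomp g f) = zcomp (zcomp h g) f.
Proof. by apply: zmap_eq => //= *; rewrite (lassoc L). Qed.

Lemma zidl (X Y : zz D) (f : zmap X Y) : zcomp (zid Y) f = f.
Proof. by apply: zmap_eq => //= *; rewrite (lidl L). Qed.

Lemma zidr (X Y : zz D) (f : zmap X Y) : zcomp f (zid X) = f.
Proof. by apply: zmap_eq => //= *; rewrite (lidr L). Qed.
End ZLaws0.

Section Fib.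
Variables (n m : nat) (phi : 'I_n -> 'I_m).
Hypothesis mphi : monotone phi.

Lemma G1 (i : 'I_m) (j : 'I_n) : phi j = i -> hat phi (rI i) <= j.
Proof. by move=> e; rewrite (hat_le mphi) e. Qed.

Lemma G2 (i : 'I_m) (j : 'I_n) : phi j = i -> j < hat phi (rS i).
Proof. by move=> e; rewrite ltnNge (hat_le mphi) e /= ltnn. Qed.

Lemma G4 (i : 'I_m) : hat phi (rI i) <= hat phi (rS i).
Proof. by apply: hat_mono => //=; rewrite /bump /=. Qed.

Lemma G8 (i : 'I_m) (j : 'I_n) : hat phi (rI i) <= j -> j < hat phi (rS i) -> phi j = i.
Proof.
rewrite (hat_le mphi) ltnNge (hat_le mphi) /= /bump /= => h1 h2.
by apply: val_inj => /=; lia.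
Qed.

Lemma G3 (i : 'I_m) : (forall j, phi j <> i) -> hat phi (rI i) = hat phi (rS i).
Proof.
move=> H; apply: val_inj; apply/eqP; rewrite eqn_leq G4 /=.
case: (ltnP (hat phi (rI i)) n) => [h|h]; last exact: leq_trans (hat_len _ _) h.
have := hat_le mphi (rI i) (Ordinal h); rewrite /= leqnn => /esym hh.
have ne : phi (Ordinal h) != i by apply/eqP/H.
have := hat_le mphi (rS i) (Ordinal h); rewrite /= /bump /= => ->.
move: ne hh; rewrite -val_eqE /=; lia.
Qed.

Lemma G5 (i : 'I_m) (p : 'I_n) : phi p = i -> (forall j, phi j = i -> p <= j) ->
  hat phi (rI i) = rI p.
Proof.
move=> ep H; apply: val_inj; apply/eqP; rewrite eqn_leq G1 //=.
case: (ltnP (hat phi (rI i)) p) => // h.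
have hn : (hat phi (rI i) : nat) < n by apply: ltn_trans h (ltn_ord p).
have := hat_le mphi (rI i) (Ordinal hn); rewrite /= leqnn => /esym hh.
have := @mphi (Ordinal hn) p (ltnW h); rewrite ep => hh2.
have : phi (Ordinal hn) = i by apply: val_inj => /=; lia.
by move/H => /=; rewrite leqNgt h.
Qed.

Lemma G6 (i : 'I_m) (q : 'I_n) : phi q = i -> (forall j, phi j = i -> j <= q) ->
  hat phi (rS i) = rS q.
Proof.
move=> eq H; apply: val_inj; apply/eqP; rewrite eqn_leq /= /bump /= (G2 eq) andbT.
case: (ltnP q.+1 (hat phi (rS i))) => // h.
have hn : q.+1 < n by apply: leq_trans h (hat_len _ _).
have := hat_le mphi (rS i) (Ordinal hn); rewrite /= /bump /= leqNgt h /= => /esym hh.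
have := @mphi q (Ordinal hn) (leqnSn _); rewrite eq => hh2.
have : phi (Ordinal hn) = i by apply: val_inj => /=; move: hh; rewrite ltnNge /=; lia.
by move/H => /=; rewrite ltnn.
Qed.

Lemma G7 (i : 'I_m) (j : 'I_n) : phi j = i -> exists p q : 'I_n,
  [/\ phi p = i, phi q = i, (forall j', phi j' = i -> p <= j' <= q),
      hat phi (rI i) = rI p & hat phi (rS i) = rS q].
Proof.
move=> ej.
have h1 : (hat phi (rI i) : nat) < n by apply: leq_ltn_trans (G1 ej) (ltn_ord j).
have h2 : (hat phi (rS i)).-1 < n.
  have := hat_len phi (rS i); have := G2 ej; lia.
set p := Ordinal h1; set q := Ordinal h2.
have ep : phi p = i by apply: G8 => //=; have := G1 ej; have := G2 ej; lia.
have eq : phi q = i by apply: G8 => /=; have := G1 ej; have := G2 ej; lia.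
have bnd : forall j', phi j' = i -> p <= j' <= q.
  by move=> j' e; have := G1 e; have := G2 e; rewrite /=; lia.
exists p, q; split => //.
- by apply: G5 => // j' /bnd /andP [].
- by apply: G6 => // j' /bnd /andP [].
Qed.

End Fib.

Inductive cand (D : CatD) (X Y : zz D) (f : zmap X Y) (i : 'I_(zlen Y))
   (a : 'I_(zlen X).+1) : packed D -> Prop :=
| cand1 : a = zr f (rI i) -> cand f i a (pk (comp (zfwd Y i) (zrs f (rI i))))
| cand2 : a = zr f (rS i) -> cand f i a (pk (comp (zbwd Y i) (zrs f (rS i))))
| cand3 j : zs f j = i -> a = rI j -> cand f i a (pk (comp (zss f j) (zfwd X j)))
| cand4 j : zs f j = i -> a = rS j -> cand f i a (pk (comp (zss f j) (zbwd X j))).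

Definition candU (D : CatD) (X Y : zz D) (f : zmap X Y) :=
  forall i a c c', cand f i a c -> cand f i a c' -> c = c'.

Definition okC (D : CatD) (X Y : zz D) (f : zmap X Y) :=
  [/\ monotone (zs f), (forall i, zr f i = hat (zs f) i),
      (forall i, okHom (zrs f i)), (forall j, okHom (zss f j)) & candU f].

Lemma rI_rS_neq n (i : 'I_n) (j : 'I_n) : rI i = rS j -> (i : nat) = j.+1.
Proof. by move/(f_equal val). Qed.

Section Cand.
Variables (D : CatD) (X Y : zz D) (f : zmap X Y).

Lemma cand_ends i a c : cand f i a c -> projT1 c = (zreg X a, zsing Y i).
Proof. by case=> [->|->|j <- ->|j <- ->]. Qed.

Lemma cand_hom i a c : cand f i a c -> exists h : Hom D (zreg X a) (zsing Y i), pk h = c.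
Proof. by move/cand_ends/pk_ex. Qed.

Lemma cand_adm i a c : monotone (zs f) -> (forall i, zr f i = hat (zs f) i) ->
  cand f i a c -> zr f (rI i) <= a <= zr f (rS i).
Proof.
move=> mf ezr.
case=> [->|->|j ej ->|j ej ->]; rewrite !ezr.
- by rewrite leqnn G4.
- by rewrite leqnn G4.
- by rewrite (G1 mf ej) ltnW // (G2 mf ej).
- by rewrite (G2 mf ej) andbT; apply: leq_trans (G1 mf ej) _.
Qed.

Section Pairs.
Hypothesis mf : monotone (zs f).
Hypothesis ezr : forall i, zr f i = hat (zs f) i.
Variable i : 'I_(zlen Y).
Hypothesis Hne : forall p q : 'I_(zlen X), zs f p = i -> zs f q = i ->
        (forall j, zs f j = i -> p <= j <= q) ->
        pk (comp (zss f p) (zfwd X p)) = pk (comp (zfwd Y i) (zrs f (rI i))) /\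
        pk (comp (zss f q) (zbwd X q)) = pk (comp (zbwd Y i) (zrs f (rS i))) /\
        (forall j j' : 'I_(zlen X), p <= j -> j < q -> (j' : nat) = j.+1 ->
           pk (comp (zss f j) (zbwd X j)) = pk (comp (zss f j') (zfwd X j'))).
Hypothesis He : (forall j, zs f j <> i) ->
        pk (comp (zfwd Y i) (zrs f (rI i))) = pk (comp (zbwd Y i) (zrs f (rS i))).

Let fib j : zs f j = i -> exists p q : 'I_(zlen X),
     [/\ zs f p = i, zs f q = i, (forall j', zs f j' = i -> p <= j' <= q),
      zr f (rI i) = rI p & zr f (rS i) = rS q].
Proof. by move=> ej; rewrite !ezr; exact: G7 ej. Qed.

Lemma P12 : zr f (rI i) = zr f (rS i) ->
  pk (comp (zfwd Y i) (zrs f (rI i))) = pk (comp (zbwd Y i) (zrs f (rS i))).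
Proof.
move=> e; apply: He => j ej.
by move: (G1 mf ej) (G2 mf ej); rewrite -!ezr e; lia.
Qed.

Lemma P13 j : zs f j = i -> zr f (rI i) = rI j ->
  pk (comp (zfwd Y i) (zrs f (rI i))) = pk (comp (zss f j) (zfwd X j)).
Proof.
move=> ej e; have [p [q [ep eq bnd e1 e2]]] := fib ej.
have jp : j = p by apply: val_inj; move: e; rewrite e1 => /(f_equal val) /= ->.
subst j; by case: (Hne ep eq bnd) => [-> _].
Qed.

Lemma P14 j : zs f j = i -> zr f (rI i) = rS j -> False.
Proof. by move=> ej e; move: (G1 mf ej); rewrite -ezr e /= /bump /=; lia. Qed.

Lemma P23 j : zs f j = i -> zr f (rS i) = rI j -> False.
Proof. by move=> ej e; move: (G2 mf ej); rewrite -ezr e /=; lia. Qed.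

Lemma P24 j : zs f j = i -> zr f (rS i) = rS j ->
  pk (comp (zbwd Y i) (zrs f (rS i))) = pk (comp (zss f j) (zbwd X j)).
Proof.
move=> ej e; have [p [q [ep eq bnd e1 e2]]] := fib ej.
have jq : j = q by apply: val_inj; move: e; rewrite e2 => /(f_equal val) /=; rewrite /bump /=; lia.
subst j; by case: (Hne ep eq bnd) => [_ [-> _]].
Qed.

Lemma P34 j0 j1 : zs f j0 = i -> zs f j1 = i -> rI j0 = rS j1 ->
  pk (comp (zss f j0) (zfwd X j0)) = pk (comp (zss f j1) (zbwd X j1)).
Proof.
move=> e0 e1 e; have [p [q [ep eq bnd _ _]]] := fib e0.
case: (Hne ep eq bnd) => [_ [_ M]]; apply/esym; apply: M.
- by case/andP: (bnd _ e1).
- by case/andP: (bnd _ e0); move: e => /(f_equal val) /= ->.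
- by move: e => /(f_equal val) /= ->.
Qed.
End Pairs.

Lemma okZm_okC : okZm f <-> okC f.
Proof.
split.
- case=> mf [ezr [okr [oks H]]]; split => // i a c c' C0 C1.
  case: (H i) => Hne He.
  have P33 : forall j0 j1 : 'I_(zlen X), rI j0 = rI j1 -> j0 = j1.
    by move=> j0 j1 /(f_equal val) /= e; apply: val_inj.
  have P44 : forall j0 j1 : 'I_(zlen X), rS j0 = rS j1 -> j0 = j1.
    by move=> j0 j1 /(f_equal val) /=; rewrite /bump /= => -[e]; apply: val_inj.
  case: C0 => [e0|e0|j0 ej0 e0|j0 ej0 e0]; case: C1 => [e1|e1|j1 ej1 e1|j1 ej1 e1];
    have E := etrans (esym e0) e1.
  all: try by [].
  + by apply: P12.
  + by apply: P13.
  + by case: (P14 mf ezr ej1 E).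
  + apply/esym; apply: P12 => //; exact/esym.
  + by case: (P23 mf ezr ej1 E).
  + by apply: P24.
  + apply/esym; apply: P13 => //; exact/esym.
  + by case: (P23 mf ezr ej0 (esym E)).
  + by move/P33: E => E; subst j1.
  + by eapply P34; eassumption.
  + by case: (P14 mf ezr ej0 (esym E)).
  + apply/esym; apply: P24 => //; exact/esym.
  + by apply/esym; eapply P34; try eassumption; apply/esym.
  + by move/P44: E => E; subst j1.
- case=> mf ezr okr oks U; split => //; split => //; split => //; split => // i.
  split.
  + move=> p q ep eq bnd; split; [|split].
    * apply: (U i (rI p)); [apply: cand3 => //| apply: cand1].
      by rewrite ezr; apply/esym; apply: G5 => // j /bnd /andP [].
    * apply: (U i (rS q)); [apply: cand4 => //| apply: cand2].
      by rewrite ezr; apply/esym; apply: G6 => // j /bnd /andP [].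
    * move=> j j' pj jq ej'.
      have ej : zs f j = i.
        apply: val_inj; apply/eqP; rewrite eqn_leq.
        move: (mf _ _ pj) (mf _ _ (ltnW jq)); rewrite ep eq => -> ->; done.
      have ej2 : zs f j' = i.
        have jq' : j' <= q by rewrite ej'.
        have pj' : p <= j' by rewrite ej' ltnW // ltnS.
        apply: val_inj; apply/eqP; rewrite eqn_leq.
        move: (mf _ _ pj') (mf _ _ jq'); rewrite ep eq => -> ->; done.
      apply: (U i (rS j)); [apply: cand4 => //| apply: cand3 => //].
      by apply: val_inj => /=; rewrite ej'.
  + move=> ne; apply: (U i (zr f (rI i))); [apply: cand1 => //| apply: cand2].
    by rewrite !ezr; apply: G3.
Qed.
End Cand.

Section Comp.
Variables (D : CatD) (L : laws D) (X Y W : zz D) (f : zmap X Y) (g : zmap Y W).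
Hypotheses (Of : okC f) (Og : okC g).

Let mf := let: And5 x _ _ _ _ := Of in x.
Let ezf := let: And5 _ x _ _ _ := Of in x.
Let Uf := let: And5 _ _ _ _ x := Of in x.
Let mg := let: And5 x _ _ _ _ := Og in x.
Let ezg := let: And5 _ x _ _ _ := Og in x.
Let Ug := let: And5 _ _ _ _ x := Og in x.

Lemma chain (i : 'I_(zlen W)) (a : 'I_(zlen X).+1) d :
  forall (l l' : 'I_(zlen Y)) (s s' : Ob D) (h : Hom D s (zsing Y l))
    (h' : Hom D s' (zsing Y l')),
  (l' : nat) = l + d -> zs g l = i -> zs g l' = i ->
  cand f l a (pk h) -> cand f l' a (pk h') ->
  pk (comp (zss g l) h) = pk (comp (zss g l') h').
Proof.
elim: d => [|d IH] l l' s s' h h' e gl gl' C C'.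
  have E : l' = l by apply: val_inj; rewrite /= e addn0.
  subst l'; apply: pk_comp => //; exact: Uf C C'.
have l1lt : l.+1 < zlen Y by have := ltn_ord l'; lia.
set l1 := Ordinal l1lt.
have /andP [A1 A1'] := cand_adm mf ezf C; have /andP [A2 A2'] := cand_adm mf ezf C'.
have M : zr f (rS l) <= zr f (rI l').
  by rewrite !ezf; apply: hat_mono => //=; rewrite /bump /=; lia.
have Ea : a = zr f (rS l) by apply: ord_inj; lia.
have El : rS l = rI l1 by apply: val_inj.
have gl1 : zs g l1 = i.
  apply: val_inj; apply/eqP; rewrite eqn_leq.
  have := @mg l l1 (leqnSn _); have := @mg l1 l' ltac:(rewrite /=; lia).
  by rewrite gl gl' => -> ->.
have Eg : pk (comp (zss g l) (zbwd Y l)) = pk (comp (zss g l1) (zfwd Y l1)).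
  apply: (Ug (i := i) (a := rS l)); [exact: cand4|exact: cand3].
have C0 : cand f l a (pk (comp (zbwd Y l) (zrs f (rS l)))) by exact: cand2.
have C1 : cand f l1 a (pk (comp (zfwd Y l1) (zrs f (rI l1)))).
  by apply: cand1; rewrite Ea El.
rewrite (pk_comp (erefl (pk (zss g l))) (Uf C C0)).
rewrite (pk_assoc L) (@pk_comp _ _ _ _ _ _ _ _ _ _ _ Eg (_ : pk (zrs f (rS l)) = pk (zrs f (rI l1)))); last by rewrite El.
rewrite -(pk_assoc L); apply: IH => //=; lia.
Qed.

Definition nf (i : 'I_(zlen W)) :=
  pk (comp (zfwd W i) (comp (zrs g (rI i)) (zrs f (zr g (rI i))))).

Lemma form i a c : cand (zcomp g f) i a c ->
  (exists l (s : Ob D) (h : Hom D s (zsing Y l)),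
     [/\ zs g l = i, cand f l a (pk h) & c = pk (comp (zss g l) h)])
  \/ ((forall l, zs g l <> i) /\ c = nf i).
Proof.
case=> [e0|e0|j ej e0|j ej e0].
- case: (boolP [exists l, zs g l == i]) => [/existsP [l0 /eqP el0]|/existsPn ne]; last first.
    by right; split => // l el; move: (ne l); rewrite el eqxx.
  left; have [p [q [ep eq bnd Ep Eq]]] := G7 mg el0; rewrite -ezg in Ep.
  have Eg : pk (comp (zfwd W i) (zrs g (rI i))) = pk (comp (zss g p) (zfwd Y p)).
    by apply: (Ug (i := i) (a := rI p)); [apply: cand1|apply: cand3].
  exists p, _, (comp (zfwd Y p) (zrs f (rI p))); split => //.
    by apply: cand1; rewrite e0 /= Ep.
  rewrite /= (pk_assoc L) (@pk_comp _ _ _ _ _ _ _ _ _ _ _ Eg (_ : pk (zrs f (zr g (rI i))) = pk (zrs f (rI p)))); last by rewrite Ep.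
  by rewrite (pk_assoc L).
- case: (boolP [exists l, zs g l == i]) => [/existsP [l0 /eqP el0]|/existsPn ne]; last first.
    have ne' : forall l, zs g l <> i by move=> l el; move: (ne l); rewrite el eqxx.
    right; split => //.
    have E : zr g (rI i) = zr g (rS i) by rewrite !ezg; exact: G3.
    have Eg : pk (comp (zfwd W i) (zrs g (rI i))) = pk (comp (zbwd W i) (zrs g (rS i))).
      by apply: (Ug (i := i) (a := zr g (rI i))); [apply: cand1|apply: cand2].
    rewrite /nf /= (pk_assoc L) (pk_assoc L); apply/esym.
    apply: pk_comp => //; by rewrite E.
  left; have [p [q [ep eq bnd Ep Eq]]] := G7 mg el0; rewrite -ezg in Eq.
  have Eg : pk (comp (zbwd W i) (zrs g (rS i))) = pk (comp (zss g q) (zbwd Y q)).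
    by apply: (Ug (i := i) (a := rS q)); [apply: cand2|apply: cand4].
  exists q, _, (comp (zbwd Y q) (zrs f (rS q))); split => //.
    by apply: cand2; rewrite e0 /= Eq.
  rewrite /= (pk_assoc L) (@pk_comp _ _ _ _ _ _ _ _ _ _ _ Eg (_ : pk (zrs f (zr g (rS i))) = pk (zrs f (rS q)))); last by rewrite Eq.
  by rewrite (pk_assoc L).
- left; exists (zs f j), _, (comp (zss f j) (zfwd X j)); split => //.
    exact: cand3.
  by rewrite /= (pk_assoc L).
- left; exists (zs f j), _, (comp (zss f j) (zbwd X j)); split => //.
    exact: cand4.
  by rewrite /= (pk_assoc L).
Qed.

Lemma okC_comp : okC (zcomp g f).
Proof.
case: Of => _ _ okrf oksf _; case: Og => _ _ okrg oksg _.
split.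
- by move=> a b ab; apply: mg; apply: mf.
- by move=> i; rewrite /= ezg ezf (hat_comp mf mg).
- by move=> i; apply: (lokc L); [exact: okrf|exact: okrg].
- by move=> j; apply: (lokc L); [exact: oksf|exact: oksg].
move=> i a c c' /form [[l [s [h [gl C ->]]]]|[ne ->]] /form [[l' [s' [h' [gl' C' ->]]]]|[ne' ->]] //.
- case: (leqP l l') => ll.
    by apply: (chain (i := i) (a := a) (d := l' - l)) => //; lia.
  by apply/esym; apply: (chain (i := i) (a := a) (d := l - l')) => //; lia.
- by case: (ne' _ gl).
- by case: (ne _ gl').
Qed.
End Comp.

Lemma okC_zid (D : CatD) (L : laws D) (X : zz D) : okC (zid X).
Proof.
split => //.
- by move=> i; rewrite hat_id.
- by move=> i; apply: (lokid L).
- by move=> j; apply: (lokid L).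
have N : forall i a c, cand (zid X) i a c ->
   (a = rI i /\ c = pk (zfwd X i)) \/ (a = rS i /\ c = pk (zbwd X i)).
  move=> i a c; case=> [->|->|j /= <- ->|j /= <- ->] /=.
  - by left; rewrite (lidr L).
  - by right; rewrite (lidr L).
  - by left; rewrite (lidl L).
  - by right; rewrite (lidl L).
move=> i a c c' /N [[-> ->]|[-> ->]] /N [[e ->]|[e ->]] //.
- by move/(f_equal val): e => /=; rewrite /bump /=; lia.
- by move/(f_equal val): e => /=; rewrite /bump /=; lia.
Qed.

Lemma Zlaws (D : CatD) : laws D -> laws (Z D).
Proof.
move=> L; split.
- by move=> *; apply: zassoc.
- by move=> *; apply: zidl.
- by move=> *; apply: zidr.
- by move=> X Y W f g /okZm_okC Of /okZm_okC Og; apply/okZm_okC; apply: okC_comp.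
- by move=> X; apply/okZm_okC; apply: okC_zid.
Qed.

Lemma mono_inj_ge n m (f : 'I_n -> 'I_m) : monotone f -> injective f ->
  forall j : 'I_n, (j : nat) <= f j.
Proof.
move=> mf fi; suff H : forall k (j : 'I_n), (j : nat) = k -> k <= f j.
  by move=> j; apply: H.
elim=> [//|k IH] j ej.
have kn : k < n by have := ltn_ord j; lia.
have := IH (Ordinal kn) erefl; have := @mf (Ordinal kn) j ltac:(rewrite ej /=; lia).
have : f (Ordinal kn) != f j.
  by apply/eqP => /fi /(f_equal val) /=; lia.
rewrite -val_eqE /=; lia.
Qed.

Section Iso.
Variables (D : CatD) (L : laws D) (X Y : zz D) (v : zmap X Y) (w : zmap Y X).
Hypotheses (e1 : zcomp w v = zid X) (e2 : zcomp v w = zid Y) (Ov : okZm v) (Ow : okZm w).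

Lemma iso_wv j : zs w (zs v j) = j.
Proof. exact: (f_equal (fun h => zs h j) e1). Qed.
Lemma iso_vw j : zs v (zs w j) = j.
Proof. exact: (f_equal (fun h => zs h j) e2). Qed.
Lemma iso_rwv i : zr v (zr w i) = i.
Proof. exact: (f_equal (fun h => zr h i) e1). Qed.
Lemma iso_rvw i : zr w (zr v i) = i.
Proof. exact: (f_equal (fun h => zr h i) e2). Qed.

Lemma iso_ss j : isIso (zss v j).
Proof.
case/okZm_okC: Ov => _ _ _ okv _; case/okZm_okC: Ow => _ _ _ okw _.
have eb : zsing X (zs w (zs v j)) = zsing X j by rewrite iso_wv.
set g := castH erefl eb (zss w (zs v j)).
have pg : pk g = pk (zss w (zs v j)) by exact: pk_castH.
split => //; exists g; split; first exact: (pk_tr (esym pg) (okw _)).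
split; apply: pk_inj.
- rewrite (pk_comp pg (erefl (pk (zss v j)))).
  exact: (f_equal (fun h => pk (zss h j)) e1).
- have E : pk (zss v j) = pk (zss v (zs w (zs v j))) by rewrite iso_wv.
  rewrite (pk_comp E pg).
  exact: (f_equal (fun h => pk (zss h (zs v j))) e2).
Qed.

Lemma iso_rs i : isIso (zrs v i).
Proof.
case/okZm_okC: Ov => _ _ okv _ _; case/okZm_okC: Ow => _ _ okw _ _.
have ea : zreg Y (zr w (zr v i)) = zreg Y i by rewrite iso_rvw.
set g := castH ea erefl (zrs w (zr v i)).
have pg : pk g = pk (zrs w (zr v i)) by exact: pk_castH.
split => //; exists g; split; first exact: (pk_tr (esym pg) (okw _)).
split; apply: pk_inj.
- have E : pk (zrs v i) = pk (zrs v (zr w (zr v i))) by rewrite iso_rvw.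
  rewrite (pk_comp pg E).
  exact: (f_equal (fun h => pk (zrs h (zr v i))) e1).
- rewrite (pk_comp (erefl (pk (zrs v i))) pg).
  exact: (f_equal (fun h => pk (zrs h i)) e2).
Qed.

Lemma iso_vert : vertical v.
Proof.
case/okZm_okC: Ov => mv _ _ _ _; case/okZm_okC: Ow => mw _ _ _ _.
have iv : injective (zs v) by move=> a b /(f_equal (zs w)); rewrite !iso_wv.
have iw : injective (zs w) by move=> a b /(f_equal (zs v)); rewrite !iso_vw.
split.
  apply/eqP; rewrite eqn_leq; have := @leq_card _ _ _ iv; have := @leq_card _ _ _ iw.
  by rewrite !card_ord => -> ->.
move=> j; apply/eqP; rewrite eqn_leq (mono_inj_ge mv iv) andbT.
have := mono_inj_ge mw iw (zs v j); rewrite iso_wv //.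
Qed.
End Iso.

Record degP (D : CatD) (P : forall a b : Ob D, Hom D a b -> Prop) : Prop := DegP {
  Pcomp : forall (a b c : Ob D) (f : Hom D a b) (g : Hom D b c),
     okOb b -> P a b f -> P b c g -> P a c (comp g f);
  Piso : forall (a b : Ob D) (f : Hom D a b), isIso f -> P a b f;
  Pok : forall (a b : Ob D) (f : Hom D a b), P a b f -> okHom f }.

Definition degZ (D : CatD) (P : forall a b : Ob D, Hom D a b -> Prop) :=
  @genComp (Z D) (fun a b f => simpleDeg f \/ parallelDeg P f).

Lemma degP_Z (D : CatD) (P : forall a b : Ob D, Hom D a b -> Prop) :
  laws D -> degP P -> degP (degZ P).
Proof.
move=> L dP; split.
- by move=> a b c f g ob Pf Pg; apply: gc_comp.
- move=> X Y v [Ov [w [Ow [e1 e2]]]]; apply: gc_base; right.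
  split => //; split; first exact: (iso_vert e1 e2 Ov Ow).
  split=> [i|j]; apply: (Piso dP).
  + exact: (iso_rs e1 e2 Ov Ow).
  + exact: (iso_ss e1 e2 Ov Ow).
- move=> a b f; elim=> {a b f} [a b f [[]|[]]|a b c f g _ _ Hf _ Hg] //.
  exact: (lokc (Zlaws L)).
Qed.

Lemma laws_catD (C : Category) : laws (catD C).
Proof.
split => //=.
- exact: ccompA.
- exact: ccomp1l.
- exact: ccomp1r.
Qed.

Lemma degP_catD (C : Category) : degP (@isIso (catD C)).
Proof.
split => //.
move=> a b c f g _ [_ [f' [_ [f1 f2]]]] [_ [g' [_ [g1 g2]]]].
split => //; exists (comp f' g'); split => //=; rewrite /= in f1 f2 g1 g2; split.
- by rewrite -ccompA (ccompA g' g f) g1 ccomp1l f1.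
- by rewrite -ccompA (ccompA f f' g') f2 ccomp1l g2.
Qed.

Lemma levels (C : Category) (k : nat) :
  laws (iterZ k (catD C)) /\ degP (@degen (catD C) k).
Proof.
elim: k => [|k [L dP]]; first by split; [exact: laws_catD|exact: degP_catD].
split; first exact: Zlaws.
exact: (degP_Z L dP).
Qed.

Lemma cand_ok (D : CatD) (L : laws D) (X Y : zz D) (h : zmap X Y) :
  okZz X -> okZz Y -> okC h -> forall l a c, cand h l a c -> okHom (projT2 c).
Proof.
case=> _ [_ [okfX okbX]] [_ [_ [okfY okbY]]].
case=> _ _ okr oks _ l a c; case=> *; apply: (lokc L); by [apply: okr|apply: oks|apply: okfX|apply: okbX|apply: okfY|apply: okbY].
Qed.

Lemma cand_exists (D : CatD) (X Y : zz D) (h : zmap X Y) :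
  okC h -> forall l (a : 'I_(zlen X).+1), zr h (rI l) <= a <= zr h (rS l) -> exists c, cand h l a c.
Proof.
case=> mh ezh _ _ _ l a /andP [a1 a2].
case: (boolP [exists j : 'I_(zlen X), (zs h j == l) && ((j : nat) == a)]).
  case/existsP => j /andP [/eqP ej /eqP ja]; eexists; apply: (cand3 ej).
  by apply: ord_inj.
move/existsPn => n3.
case: (boolP [exists j : 'I_(zlen X), (zs h j == l) && ((j.+1 : nat) == a)]).
  case/existsP => j /andP [/eqP ej /eqP ja]; eexists; apply: (cand4 ej).
  by apply: ord_inj => /=; rewrite /bump /=; lia.
move/existsPn => n4.
eexists; apply: cand1; apply: ord_inj; apply/eqP; rewrite eqn_leq a1 andbT.
rewrite leqNgt; apply/negP => lt.
have an : a.-1 < zlen X by move: a2; rewrite ezh; have := hat_len (zs h) (rS l); lia.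
have ej : zs h (Ordinal an) = l.
  apply: (G8 mh); rewrite -!ezh /=; lia.
move: (n4 (Ordinal an)); rewrite ej eqxx /=; have -> : a.-1.+1 = (a : nat) by lia.
by rewrite eqxx.
Qed.

Section Lift.
Variables (D : CatD) (L : laws D) (A : zz D) (m : nat) (phi : 'I_(zlen A) -> 'I_m).
Hypotheses (mphi : monotone phi) (iphi : injective phi).

Definition pre (i : 'I_m) : option 'I_(zlen A) := [pick j | phi j == i].

Lemma pre_img j : pre (phi j) = Some j.
Proof.
rewrite /pre; case: pickP => [j' /eqP /iphi -> //|/(_ j)]; by rewrite eqxx.
Qed.

Lemma pre_someP i j : pre i = Some j -> phi j = i.
Proof. by rewrite /pre; case: pickP => // j' /eqP e [<-]. Qed.

Lemma pre_noneP i : pre i = None -> forall j, phi j <> i.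
Proof. by rewrite /pre; case: pickP => // H _ j e; move: (H j); rewrite e eqxx. Qed.

Lemma hat_rI_img j : hat phi (rI (phi j)) = rI j.
Proof. by apply: G5 => // j' /iphi ->. Qed.

Lemma hat_rS_img j : hat phi (rS (phi j)) = rS j.
Proof. by apply: G6 => // j' /iphi ->. Qed.

Definition lreg (i : 'I_m.+1) := zreg A (hat phi i).
Definition sg (i : 'I_m) (o : option 'I_(zlen A)) :=
  match o with Some j => zsing A j | None => zreg A (hat phi (rI i)) end.
Definition lsing (i : 'I_m) := sg i (pre i).

Lemma eqF i j : pre i = Some j -> zreg A (rI j) = zreg A (hat phi (rI i)).
Proof. by move/pre_someP => <-; rewrite hat_rI_img. Qed.
Lemma eqB i j : pre i = Some j -> zreg A (rS j) = zreg A (hat phi (rS i)).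
Proof. by move/pre_someP => <-; rewrite hat_rS_img. Qed.
Lemma eqN i : pre i = None -> zreg A (hat phi (rI i)) = zreg A (hat phi (rS i)).
Proof. by move/pre_noneP => H; rewrite (G3 mphi H). Qed.

Definition lfwd_aux i (o : option 'I_(zlen A)) : pre i = o ->
    Hom D (zreg A (hat phi (rI i))) (sg i o) :=
  match o as o' return pre i = o' -> Hom D (zreg A (hat phi (rI i))) (sg i o') with
  | Some j => fun e => castH (eqF e) erefl (zfwd A j)
  | None => fun _ => idm _
  end.
Definition lbwd_aux i (o : option 'I_(zlen A)) : pre i = o ->
    Hom D (zreg A (hat phi (rS i))) (sg i o) :=
  match o as o' return pre i = o' -> Hom D (zreg A (hat phi (rS i))) (sg i o') with
  | Some j => fun e => castH (eqB e) erefl (zbwd A j)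
  | None => fun e => castH (eqN e) erefl (idm _)
  end.

Definition lfwd i : Hom D (lreg (rI i)) (lsing i) := lfwd_aux (erefl (pre i)).
Definition lbwd i : Hom D (lreg (rS i)) (lsing i) := lbwd_aux (erefl (pre i)).

Lemma aux_spec i o (e : pre i = o) :
  (forall j, o = Some j -> pk (lfwd_aux e) = pk (zfwd A j) /\ pk (lbwd_aux e) = pk (zbwd A j)) /\
  (o = None -> pk (lfwd_aux e) = pk (idm (zreg A (hat phi (rI i)))) /\
               pk (lbwd_aux e) = pk (idm (zreg A (hat phi (rI i))))).
Proof.
case: o e => [j|] e; split.
- by move=> j' [<-] /=; rewrite !pk_castH.
- by [].
- by [].
- by move=> _ /=; rewrite pk_castH.
Qed.

Lemma lspec i :
  (exists j, [/\ pre i = Some j, phi j = i, pk (lfwd i) = pk (zfwd A j) &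
                 pk (lbwd i) = pk (zbwd A j)]) \/
  [/\ pre i = None, (forall j, phi j <> i),
      pk (lfwd i) = pk (idm (zreg A (hat phi (rI i)))) &
      pk (lbwd i) = pk (idm (zreg A (hat phi (rI i))))].
Proof.
have [S N] := aux_spec (erefl (pre i)).
case E: (pre i) => [j|].
  left; exists j; have [S1 S2] := S j E; split => //; exact: pre_someP.
right; have [N1 N2] := N E; split => //; exact: pre_noneP.
Qed.

Definition Lz : zz D := @Zz D m lreg lsing lfwd lbwd.

Lemma lsing_img j : zsing A j = lsing (phi j).
Proof. by rewrite /lsing pre_img. Qed.

Definition s0 : zmap A Lz :=
  @Zm D A Lz phi (hat phi) (fun i => idm (zreg A (hat phi i)))
     (fun j => castH erefl (lsing_img j) (idm (zsing A j))).

Lemma pk_s0ss j : pk (zss s0 j) = pk (idm (zsing A j)).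
Proof. exact: pk_castH. Qed.

Lemma okZz_Lz : okZz A -> okZz Lz.
Proof.
case=> okr [oks [okf okb]]; split; [|split; [|split]] => /=.
- by move=> i; apply: okr.
- by move=> i; rewrite /lsing; case: (pre i) => [j|] /=; [apply: oks|apply: okr].
- move=> i; case: (lspec i) => [[j [_ _ e _]]|[_ _ e _]].
    exact: (pk_tr (esym e) (okf j)).
  exact: (pk_tr (esym e) (lokid L _)).
- move=> i; case: (lspec i) => [[j [_ _ _ e]]|[_ _ _ e]].
    exact: (pk_tr (esym e) (okb j)).
  exact: (pk_tr (esym e) (lokid L _)).
Qed.

Definition canon (i : 'I_m) (a : 'I_(zlen A).+1) : packed D :=
  match pre i with
  | Some j => if a == rI j then pk (zfwd A j) else pk (zbwd A j)
  | None => pk (idm (zreg A a)) end.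

Lemma rI_neq_rS n (j : 'I_n) : (rS j == rI j) = false.
Proof. by apply/negP => /eqP /(f_equal val) /=; rewrite /bump /=; lia. Qed.

Lemma s0_canon i a c : cand s0 i a c -> c = canon i a.
Proof.
rewrite /canon; case: (lspec i) => [[j0 [E ej0 F B]]|[E ne F B]]; rewrite E.
- case=> [e|e|j ej e|j ej e].
  + rewrite /= (lidr L) F e /= -ej0 hat_rI_img eqxx //.
  + rewrite /= (lidr L) B e /= -ej0 hat_rS_img rI_neq_rS //.
  + have jj : j = j0 by apply: iphi; rewrite ej0; exact: ej.
    subst j0; rewrite e eqxx; apply: (pk_compidl L); exact: pk_s0ss.
  + have jj : j = j0 by apply: iphi; rewrite ej0; exact: ej.
    subst j0; rewrite e rI_neq_rS; apply: (pk_compidl L); exact: pk_s0ss.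
- case=> [e|e|j ej e|j ej e].
  + by rewrite /= (lidr L) F e.
  + by rewrite /= (lidr L) B e /= -(G3 mphi ne).
  + by case: (ne j).
  + by case: (ne j).
Qed.

Lemma okC_s0 : okC s0.
Proof.
split => //.
- by move=> i; apply: (lokid L).
- by move=> j; apply: (pk_tr (esym (pk_s0ss j))); apply: (lokid L).
by move=> i a c c' /s0_canon -> /s0_canon ->.
Qed.

Section Cocart.
Variables (Y' : zz D) (h : zmap A Y') (u : 'I_m -> 'I_(zlen Y')).
Hypotheses (Oh : okC h) (mu : monotone u) (hu : forall j, u (phi j) = zs h j).

Let mh := let: And5 x _ _ _ _ := Oh in x.
Let ezh := let: And5 _ x _ _ _ := Oh in x.
Let okrh := let: And5 _ _ x _ _ := Oh in x.
Let oksh := let: And5 _ _ _ x _ := Oh in x.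
Let Uh := let: And5 _ _ _ _ x := Oh in x.

Lemma zsh_eq : zs h = fun j => u (phi j).
Proof. by apply: functional_extensionality => j; rewrite hu. Qed.

Lemma zrh_eq i : zr h i = hat phi (hat u i).
Proof. by rewrite ezh zsh_eq (hat_comp mphi mu). Qed.

Lemma adm i : zr h (rI (u i)) <= hat phi (rI i) <= zr h (rS (u i)).
Proof.
rewrite !zrh_eq; apply/andP; split; apply: hat_mono => //.
- exact: (G1 mu (erefl (u i))).
- exact: ltnW (G2 mu (erefl (u i))).
Qed.

Lemma vss_ex i : exists hh : Hom D (lsing i) (zsing Y' (u i)),
  (forall j, pre i = Some j -> pk hh = pk (zss h j)) /\
  (pre i = None -> exists c, cand h (u i) (hat phi (rI i)) c /\ pk hh = c).
Proof.
rewrite /lsing; case E: (pre i) => [j|] /=.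
  have ej := pre_someP E.
  have eb : zsing Y' (zs h j) = zsing Y' (u i) by rewrite -hu ej.
  exists (castH erefl eb (zss h j)); split => // j' [<-]; exact: pk_castH.
have [c C] := cand_exists Oh (adm i).
have [hh Hh] := cand_hom C.
by exists hh; split => // _; exists c.
Qed.

Definition vss i := proj1_sig (constructive_indefinite_description _ (vss_ex i)).
Lemma vss_spec i :
  (forall j, pre i = Some j -> pk (vss i) = pk (zss h j)) /\
  (pre i = None -> exists c, cand h (u i) (hat phi (rI i)) c /\ pk (vss i) = c).
Proof. exact: (proj2_sig (constructive_indefinite_description _ (vss_ex i))). Qed.

Lemma vea i : zreg A (zr h i) = lreg (hat u i).
Proof. by rewrite /lreg zrh_eq. Qed.

Definition vmap : zmap Lz Y' :=
  @Zm D Lz Y' u (hat u) (fun i => castH (vea i) erefl (zrs h i)) vss.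

Lemma pk_vrs i : pk (zrs vmap i) = pk (zrs h i).
Proof. exact: pk_castH. Qed.

Lemma v_cand l b c : cand vmap l b c -> exists c', cand h l (hat phi b) c' /\ c = c'.
Proof.
case=> [e|e|i ei e|i ei e].
- eexists; split; first by apply: cand1; rewrite e zrh_eq.
  by apply: pk_comp => //; exact: pk_vrs.
- eexists; split; first by apply: cand2; rewrite e zrh_eq.
  by apply: pk_comp => //; exact: pk_vrs.
- have ei' : u i = l := ei.
  case: (lspec i) => [[j0 [E ej0 F B]]|[E ne F B]].
    eexists; split.
      apply: (cand3 (j := j0)); first by rewrite -hu ej0.
      by rewrite e -ej0 hat_rI_img.
    exact: (pk_comp ((vss_spec i).1 j0 E) F).
  have [c0 [C0 P0]] := (vss_spec i).2 E.
  exists c0; split; first by rewrite e -ei'.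
  by rewrite -P0; exact: (pk_compidr L _ F).
- have ei' : u i = l := ei.
  case: (lspec i) => [[j0 [E ej0 F B]]|[E ne F B]].
    eexists; split.
      apply: (cand4 (j := j0)); first by rewrite -hu ej0.
      by rewrite e -ej0 hat_rS_img.
    exact: (pk_comp ((vss_spec i).1 j0 E) B).
  have [c0 [C0 P0]] := (vss_spec i).2 E.
  exists c0; split; first by rewrite e -ei' -(G3 mphi ne).
  by rewrite -P0; exact: (pk_compidr L _ B).
Qed.

Lemma okC_v : okZz A -> okZz Y' -> okC vmap.
Proof.
move=> okA okY; split => //.
- by move=> i; apply: (pk_tr (esym (pk_vrs i))).
- move=> i; case: (lspec i) => [[j0 [E _ _ _]]|[E _ _ _]].
    exact: (pk_tr (esym ((vss_spec i).1 j0 E))).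
  have [c0 [C0 P0]] := (vss_spec i).2 E.
  by have := cand_ok L okA okY Oh C0; rewrite -P0.
move=> l b c c' /v_cand [c1 [C1 ->]] /v_cand [c2 [C2 ->]]; exact: Uh C1 C2.
Qed.

Lemma v_comp : zcomp vmap s0 = h.
Proof.
apply: zmap_eq => //=.
- by move=> i; rewrite zrh_eq.
- by move=> i; rewrite (lidr L); exact: pk_vrs.
- move=> j; rewrite (pk_compidr L _ (pk_s0ss j)).
  exact: ((vss_spec (phi j)).1 j (pre_img j)).
Qed.

End Cocart.

Lemma s0_un (Y' : zz D) (v v' : zmap Lz Y') : okC v -> okC v' ->
  zcomp v s0 = zcomp v' s0 -> (forall i, zs v i = zs v' i) -> v = v'.
Proof.
case=> mv ezv _ _ Uv; case=> mv' ezv' _ _ Uv' E zE.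
have zsE : zs v = zs v' by apply: functional_extensionality.
have zrE : forall i, zr v i = zr v' i by move=> i; rewrite ezv ezv' zsE.
have rsE : forall i, pk (zrs v i) = pk (zrs v' i).
  by move=> i; move: (f_equal (fun x => pk (zrs x i)) E) => /=; rewrite !(lidr L).
have Eimg : forall j, pk (zss v (phi j)) = pk (zss v' (phi j)).
  move=> j; move: (f_equal (fun x => pk (zss x j)) E) => /=.
  by rewrite (pk_compidr L _ (pk_s0ss j)) (pk_compidr L _ (pk_s0ss j)).
apply: zmap_eq => //.
suff H : forall k (i : 'I_m), (i : nat) < k -> pk (zss v i) = pk (zss v' i).
  by move=> i; apply: (H m).
elim=> [//|k IH] i ik.
case: (lspec i) => [[j [_ ej _ _]]|[E0 ne F B]]; first by subst i; exact: Eimg.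
case: (boolP [exists i0 : 'I_m, ((i0.+1 : nat) == i) && (zs v i0 == zs v i)]).
  case/existsP => i0 /andP [/eqP e0 /eqP z0].
  have z0' : zs v' i0 = zs v' i by rewrite -zE -zE.
  have ea : rI i = rS i0 by apply: ord_inj => /=; rewrite /bump /=; lia.
  have U1 : pk (comp (zss v i) (lfwd i)) = pk (comp (zss v i0) (lbwd i0)).
    by apply: (Uv (zs v i) (rI i)); [apply: cand3|apply: cand4].
  have U2 : pk (comp (zss v' i) (lfwd i)) = pk (comp (zss v' i0) (lbwd i0)).
    by apply: (Uv' (zs v' i) (rI i)); [apply: cand3|apply: cand4].
  rewrite -(pk_compidr L (zss v i) F) -(pk_compidr L (zss v' i) F) U1 U2.
  by apply: pk_comp => //; apply: IH; lia.
move/existsPn => nA.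
have Emin : zr v (rI (zs v i)) = rI i.
  rewrite ezv; apply: G5 => // j ej; rewrite leqNgt; apply/negP => ji.
  have i0lt : i.-1 < m by have := ltn_ord i; lia.
  have := nA (Ordinal i0lt); rewrite /=.
  have -> : i.-1.+1 = (i : nat) by rewrite prednK //; apply: leq_ltn_trans ji.
  rewrite eqxx /=; apply/negP/negPn/eqP; apply: ord_inj; apply/eqP; rewrite eqn_leq.
  have := @mv (Ordinal i0lt) i ltac:(rewrite /=; lia).
  have jle : (j : nat) <= i.-1 by rewrite -ltnS prednK // (leq_ltn_trans _ ji).
  have := @mv j (Ordinal i0lt) jle.
  by rewrite ej => -> ->.
have Emin' : zr v' (rI (zs v' i)) = rI i by rewrite -zrE -zE.
have U1 : pk (comp (zss v i) (lfwd i)) = pk (comp (zfwd Y' (zs v i)) (zrs v (rI (zs v i)))).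
  by apply: (Uv (zs v i) (rI i)); [apply: cand3|apply: cand1].
have U2 : pk (comp (zss v' i) (lfwd i)) = pk (comp (zfwd Y' (zs v' i)) (zrs v' (rI (zs v' i)))).
  by apply: (Uv' (zs v' i) (rI i)); [apply: cand3|apply: cand1].
rewrite -(pk_compidr L (zss v i) F) -(pk_compidr L (zss v' i) F) U1 U2.
rewrite -zE; apply: pk_comp => //.
Qed.

Lemma cocart_s0 : okZz A -> cocartesian s0.
Proof.
move=> okA Y' h okY Oh u mu hu; have Oh' := proj1 (okZm_okC h) Oh; split.
  exists (vmap Oh' mu hu); split; last split.
  - by apply/okZm_okC; apply: okC_v.
  - exact: (v_comp Oh' mu hu).
  - by [].
move=> v v' Ov Ov' E E' zv zv'.
apply: s0_un; [exact/okZm_okC|exact/okZm_okC| by rewrite E E'|by move=> i; rewrite zv zv'].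
Qed.

Lemma s0_ex_spec (Y' : zz D) (h : zmap A Y') : okZz A -> okZz Y' -> okZm h ->
  forall u : 'I_m -> 'I_(zlen Y'), monotone u -> (forall j, u (phi j) = zs h j) ->
  exists v : zmap Lz Y', [/\ okZm v, zcomp v s0 = h, (forall j, zs v j = u j) &
    (forall i, pre i = None -> exists c, cand h (u i) (hat phi (rI i)) c /\ pk (zss v i) = c)].
Proof.
move=> okA okY Oh u mu hu; have Oh' := proj1 (okZm_okC h) Oh.
exists (vmap Oh' mu hu); split => //.
- by apply/okZm_okC; apply: okC_v.
- exact: (v_comp Oh' mu hu).
- by move=> i; exact: (vss_spec Oh' mu hu i).2.
Qed.

End Lift.

Section Main.
Variables (D : CatD) (L : laws D) (P : forall a b : Ob D, Hom D a b -> Prop).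
Hypothesis dP : degP P.

Definition Inv (X Y : zz D) (f : zmap X Y) :=
 [/\ okZm f, injective (zs f), (forall i, P (zrs f i)), (forall j, P (zss f j)) &
     (forall i, (forall j, zs f j <> i) -> P (comp (zfwd Y i) (zrs f (rI i))))].

Lemma Inv_par (X Y : zz D) (f : zmap X Y) : parallelDeg P f -> Inv f.
Proof.
case=> Of [[el ev] [Pr Ps]]; split => //.
  by move=> a b /(f_equal (@nat_of_ord _)); rewrite !ev => e; apply: ord_inj.
move=> i ne; have lt : (i : nat) < zlen X by rewrite el.
by case: (ne (Ordinal lt)); apply: ord_inj; rewrite ev.
Qed.

Lemma monoD_inj n m (f : 'I_n -> 'I_m) : monoD f -> injective f.
Proof.
case=> _ H a b e.
have := H 1 (fun _ => a) (fun _ => b) (fun _ _ _ => leqnn _) (fun _ _ _ => leqnn _) (fun _ => e).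
by move/(_ ord0).
Qed.

Lemma Inv_simple (X Y : zz D) (f : zmap X Y) : okZz X -> okZz Y -> simpleDeg f -> Inv f.
Proof.
move=> okX okY [Of [Cf Mf]].
have If := monoD_inj Mf.
have /okZm_okC [mf ezf okrf oksf Uf] := Of.
set M := Lz mf If; set s := s0 mf If.
have okM : okZz M by exact: okZz_Lz.
have Os : okZm s by apply/okZm_okC; apply: okC_s0.
have [[w [Ow [Ew Zw]]] _] := Cf M s okM Os (fun j => j) (fun a b ab => ab) (fun j => erefl).
have [v [Ov Ev Zv Sv]] := s0_ex_spec L mf If okX okY Of (fun a b ab => ab) (fun j => erefl).
have ZL := Zlaws L.
have e2 : zcomp v w = zid Y.
  case: (Cf Y f okY Of (fun j => j) (fun a b ab => ab) (fun j => erefl)) => _ U.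
  apply: U.
  - exact: (lokc ZL Ow Ov).
  - exact: (lokid ZL).
  - by rewrite -zassoc // Ew Ev.
  - exact: zidl.
  - by move=> j /=; rewrite Zw Zv.
  - by [].
have e1 : zcomp w v = zid M.
  case: (@cocart_s0 _ L _ _ _ mf If okX M s okM Os (fun j => j) (fun a b ab => ab) (fun j => erefl)) => _ U.
  apply: U.
  - exact: (lokc ZL Ov Ow).
  - exact: (lokid ZL).
  - by rewrite -zassoc // Ev Ew.
  - exact: zidl.
  - by move=> j /=; rewrite Zv Zw.
  - by [].
have Prs : forall i, pk (zrs f i) = pk (zrs v i).
  by move=> i; rewrite -(f_equal (fun x => pk (zrs x i)) Ev) /= (lidr L).
have Pss : forall j, pk (zss f j) = pk (zss v (zs f j)).
  by move=> j; rewrite -(f_equal (fun x => pk (zss x j)) Ev) /= (pk_compidr L _ (pk_s0ss mf If j)).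
split => //.
- move=> i; apply: (pk_tr (esym (Prs i))); apply: (Piso dP).
  exact: (iso_rs e1 e2 Ov Ow).
- move=> j; apply: (pk_tr (esym (Pss j))); apply: (Piso dP).
  exact: (iso_ss e1 e2 Ov Ow).
- move=> i ne.
  have E : pre (zs f) i = None.
    by case E: (pre (zs f) i) => [j|] //; case: (ne j); apply: pre_someP E.
  have [c [C Pc]] := Sv i E.
  have C1 : cand f i (hat (zs f) (rI i)) (pk (comp (zfwd Y i) (zrs f (rI i)))).
    by apply: cand1; rewrite ezf.
  have := Uf _ _ _ _ C C1; rewrite -Pc => Q.
  apply: (pk_tr Q); apply: (Piso dP).
  exact: (iso_ss e1 e2 Ov Ow).
Qed.

Lemma Inv_comp (X Y W : zz D) (f : zmap X Y) (g : zmap Y W) :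
  okZz Y -> Inv f -> Inv g -> Inv (zcomp g f).
Proof.
move=> [okr [oks _]] [Of If Prf Psf Nf] [Og Ig Prg Psg Ng].
have ZL := Zlaws L.
split.
- exact: (lokc ZL Of Og).
- by move=> a b /Ig /If.
- by move=> i; apply: (Pcomp dP); [exact: okr|exact: Prf|exact: Prg].
- by move=> j; apply: (Pcomp dP); [exact: oks|exact: Psf|exact: Psg].
move=> i ne /=.
rewrite /=; apply: (pk_tr (esym (pk_assoc L _ _ _))).
case: (boolP [exists l, zs g l == i]) => [/existsP [l /eqP el]|/existsPn nl]; last first.
  apply: (Pcomp dP); [exact: okr|exact: Prf|apply: Ng].
  by move=> l el; move: (nl l); rewrite el eqxx.
have /okZm_okC [mg ezg _ _ Ug] := Og.
have Er : zr g (rI i) = rI l by rewrite ezg; apply: G5 => // j; rewrite -el => /Ig ->.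
have Eg : pk (comp (zfwd W i) (zrs g (rI i))) = pk (comp (zss g l) (zfwd Y l)).
  by apply: (Ug i (rI l)); [apply: cand1|apply: cand3].
have EF : pk (zrs f (zr g (rI i))) = pk (zrs f (rI l)) by rewrite Er.
apply: (pk_tr (esym (pk_comp Eg EF))).
apply: (pk_tr (pk_assoc L _ _ _)).
apply: (Pcomp dP); [exact: oks| |exact: Psg].
apply: Nf => j ej; apply: (ne j) => /=; by rewrite ej.
Qed.

Lemma Inv_degen (X Y : zz D) (f : zmap X Y) :
  degZ P f -> okZz X -> okZz Y -> Inv f.
Proof.
elim=> {X Y f} [X Y f [S|Pa]|X Y W f g okY _ IHf _ IHg] okX okW.
- exact: Inv_simple.
- exact: Inv_par.
- by apply: Inv_comp => //; [apply: IHf|apply: IHg].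
Qed.

Lemma factor (X Y : zz D) (f : zmap X Y) : okZz X -> okZz Y -> Inv f ->
  exists (M : zz D) (s : zmap X M) (p : zmap M Y),
      okZz M /\ simpleDeg s /\ parallelDeg P p /\ f = zcomp p s.
Proof.
move=> okX okY [Of If Prf Psf Nf].
have /okZm_okC [mf ezf okrf oksf Uf] := Of.
set M := Lz mf If; set s := s0 mf If.
have okM : okZz M by exact: okZz_Lz.
have [p [Op Ep Zp Sp]] := s0_ex_spec L mf If okX okY Of (fun a b ab => ab) (fun j => erefl).
exists M, s, p; split => //; split; last split; last by [].
  split; first by apply/okZm_okC; apply: okC_s0.
  split; first exact: cocart_s0.
  by split => // k a b _ _ H t; exact: (If _ _ (H t)).
split => //; split; first by split => //= j; rewrite Zp.
split.
  move=> i; apply: (pk_tr _ (Prf i)).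
  by rewrite -(f_equal (fun x => pk (zrs x i)) Ep) /= (lidr L).
move=> i; case: (lspec mf If i) => [[j [E ej _ _]]|[E ne _ _]].
  subst i; apply: (pk_tr _ (Psf j)).
  by rewrite -(f_equal (fun x => pk (zss x j)) Ep) /= (pk_compidr L _ (pk_s0ss mf If j)).
have [c [C Pc]] := Sp i E.
have C1 : cand f i (hat (zs f) (rI i)) (pk (comp (zfwd Y i) (zrs f (rI i)))).
  by apply: cand1; rewrite ezf.
have := Uf _ _ _ _ C C1; rewrite -Pc => Q.
exact: (pk_tr (esym Q) (Nf i ne)).
Qed.

Lemma uniq_fact (X Y M M' : zz D) (f : zmap X Y) (s : zmap X M) (p : zmap M Y)
    (s' : zmap X M') (p' : zmap M' Y) :
  okZz X -> okZz Y -> okZz M -> okZz M' ->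
  simpleDeg s -> parallelDeg P p -> f = zcomp p s ->
  simpleDeg s' -> parallelDeg P p' -> f = zcomp p' s' ->
  exists i : zmap M M', isIso (D := Z D) i /\ zcomp i s = s' /\ zcomp p' i = p.
Proof.
move=> okX okY okM okM' [Os [Cs _]] [Op [[lp vp] _]] Ef [Os' [Cs' _]] [Op' [[lp' vp'] _]] Ef'.
have ZL := Zlaws L.
have e : zlen M = zlen M' by rewrite lp lp'.
set u := fun j : 'I_(zlen M) => cast_ord e j.
set u' := fun j : 'I_(zlen M') => cast_ord (esym e) j.
have mu : monotone u by [].
have mu' : monotone u' by [].
have vs : forall j, (zs s j : nat) = zs f j.
  by move=> j; rewrite Ef /= vp.
have vs' : forall j, (zs s' j : nat) = zs f j.
  by move=> j; rewrite Ef' /= vp'.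
have hu : forall j, u (zs s j) = zs s' j by move=> j; apply: ord_inj; rewrite /= vs vs'.
have hu' : forall j, u' (zs s' j) = zs s j by move=> j; apply: ord_inj; rewrite /= vs vs'.
have [[i0 [Oi [Ei Zi]]] _] := Cs M' s' okM' Os' u mu hu.
have [[j0 [Oj [Ej Zj]]] _] := Cs' M s okM Os u' mu' hu'.
have Us := (Cs M s okM Os (fun j => j) (fun a b ab => ab) (fun j => erefl)).2.
have Us' := (Cs' M' s' okM' Os' (fun j => j) (fun a b ab => ab) (fun j => erefl)).2.
have e1 : zcomp j0 i0 = zid M.
  apply: Us.
  - exact: (lokc ZL Oi Oj).
  - exact: (lokid ZL).
  - by rewrite -zassoc // Ei Ej.
  - exact: zidl.
  - by move=> j /=; rewrite Zi Zj; apply: ord_inj.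
  - by [].
have e2 : zcomp i0 j0 = zid M'.
  apply: Us'.
  - exact: (lokc ZL Oj Oi).
  - exact: (lokid ZL).
  - by rewrite -zassoc // Ej Ei.
  - exact: zidl.
  - by move=> j /=; rewrite Zi Zj; apply: ord_inj.
  - by [].
exists i0; split; first by split => //; exists j0.
split => //.
have Of : okZm f by rewrite Ef; exact: (lokc ZL Os Op).
have /okZm_okC [mp _ _ _ _] := Op.
have hp : forall j, zs p (zs s j) = zs f j by move=> j; rewrite Ef.
case: (Cs Y f okY Of (zs p) mp hp) => _ U.
apply: U.
- exact: (lokc ZL Oi Op').
- exact: Op.
- by rewrite -zassoc // Ei.
- by [].
- by move=> j /=; rewrite Zi; apply: ord_inj; rewrite vp' /= vp.
- by [].
Qed.

End Main.

Unset Implicit Arguments.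
Set Strict Implicit.

Theorem lemma3p5 (C : Category) (k : nat)
  (A B : zz (iterZ k (catD C))) (f : zmap A B) :
  okZz A -> okZz B -> @degen (catD C) k.+1 A B f ->
  (exists (M : zz (iterZ k (catD C))) (s : zmap A M) (p : zmap M B),
      okZz M /\ simpleDeg s /\ parallelDeg (@degen (catD C) k) p /\ f = zcomp p s) /\
  (forall (M M' : zz (iterZ k (catD C))) (s : zmap A M) (p : zmap M B)
          (s' : zmap A M') (p' : zmap M' B),
      okZz M -> okZz M' ->
      simpleDeg s -> parallelDeg (@degen (catD C) k) p -> f = zcomp p s ->
      simpleDeg s' -> parallelDeg (@degen (catD C) k) p' -> f = zcomp p' s' ->
      exists i : zmap M M',
        isIso (D := Z (iterZ k (catD C))) i /\ zcomp i s = s' /\ zcomp p' i = p).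
Proof.
move=> okA okB Df; have [L dP] := levels C k.
split.
  apply: (factor L) => //; exact: (Inv_degen L dP Df okA okB).
move=> M M' s p s' p' okM okM'; exact: (uniq_fact L (P := @degen (catD C) k)).
Qed.
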